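(* Let $k\ge 1$, let $\pi$ be an input permutation for the $\mathfrak{D}^k\mathfrak{I}$ machine, and let $a<b<c$ be entries of $\pi$. Consider any sequence of legal operations applied to $\pi$, and consider the moment when $b$ is pushed into the increasing stack $I$. If at that moment any of the following holds: (1) $c$ is in $D_j$ and $a$ is in $D_l$ for some $l\le j$; (2) $c$ is in $D_j$ for some $j$, and $a$ is still in the input; (3) $c$ and $a$ are both still in the input, with $a$ following $c$ in $\pi$; then this sequence of operations does not produce the identity permutation as output (i.e. $\pi$ is not sorted by it).
   Context: The $\mathfrak{D}^k\mathfrak{I}$ machine consists of $k$ stacks $D_1,\dots,D_k$ (called decreasing stacks) followed in series by a stack $I$ (the increasing stack). The input permutation is read from left to right. At every moment the elements of each $D_i$ must be in decreasing order from top to bottom (the top element is the largest), and the elements of $I$ must be in increasing order from top to bottom (the top element is the smallest). The operations are: $d_0$: push the next element of the input into $D_1$; $d_i$ ($1\le i\le k-1$): pop the top of $D_i$ and push it into $D_{i+1}$; $d_k$: pop the top of $D_k$ and push it into $I$; $d_{k+1}$: pop the top of $I$ and append it to the right of the output. An operation is legal if it does not violate the order restrictions of the stacks; $d_{k+1}$ is considered legal if the popped element is the smallest among the elements not yet output, and also if no other operation is legal. The permutation is sorted by a sequence of operations if all its elements end in the output in increasing order. *)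

(* Defs.v *)
From mathcomp Require Import all_boot.
Set Implicit Arguments. Unset Strict Implicit. Unset Printing Implicit Defensive.

(* A configuration: remaining input (next element first), the decreasing
   stacks D_1..D_k (as a list of length k, each stack listed top first),
   the increasing stack I (top first), and the output produced so far
   (left to right). *)
Record mstate := MState {
  inp : seq nat;
  Ds  : seq (seq nat);
  Ist : seq nat;
  out : seq nat }.

(* the stack D_j, for 1 <= j <= k *)
Definition Dstack (s : mstate) (j : nat) : seq nat := nth [::] (Ds s) j.-1.

Definition init_state (k : nat) (pi : seq nat) : mstate :=
  MState pi (nseq k [::]) [::] [::].

Definition push_dec_ok (x : nat) (st : seq nat) : bool :=
  if st is y :: _ then y < x else true.
Definition push_inc_ok (x : nat) (st : seq nat) : bool :=
  if st is y :: _ then x < y else true.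

Definition remaining (s : mstate) : seq nat := inp s ++ flatten (Ds s) ++ Ist s.

(* operations d_0 .. d_k (those that are legal only when they respect the
   stack order); returns None when the operation is not legal *)
Definition basic_move (k : nat) (s : mstate) (o : nat) : option mstate :=
  if o == 0 then
    match inp s with
    | x :: r => if push_dec_ok x (Dstack s 1)
                then Some (MState r (set_nth [::] (Ds s) 0 (x :: Dstack s 1)) (Ist s) (out s))
                else None
    | [::] => None
    end
  else if o < k then
    match Dstack s o with
    | x :: r => if push_dec_ok x (Dstack s o.+1)
                then Some (MState (inp s)
                        (set_nth [::] (set_nth [::] (Ds s) o.-1 r) o (x :: Dstack s o.+1))
                        (Ist s) (out s))
                else None
    | [::] => None
    end
  else if o == k then
    match Dstack s k with
    | x :: r => if push_inc_ok x (Ist s)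
                then Some (MState (inp s) (set_nth [::] (Ds s) k.-1 r) (x :: Ist s) (out s))
                else None
    | [::] => None
    end
  else None.

(* all operations d_0 .. d_{k+1}; d_{k+1} is legal if the popped element is
   the smallest not yet output, or if no other operation is legal *)
Definition move (k : nat) (s : mstate) (o : nat) : option mstate :=
  if o <= k then basic_move k s o
  else if o == k.+1 then
    match Ist s with
    | x :: r =>
        if all (fun y => x <= y) (remaining s)
           || all (fun o' => if basic_move k s o' is None then true else false) (iota 0 k.+1)
        then Some (MState (inp s) (Ds s) r (rcons (out s) x))
        else None
    | [::] => None
    end
  else None.

Fixpoint run (k : nat) (s : mstate) (ops : seq nat) : option mstate :=
  match ops with
  | [::] => Some s
  | o :: ops' => match move k s o with
                 | Some s' => run k s' ops'
                 | None => None
                 end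
  end.

(* Main.v *)
Require Import Defs.
From mathcomp Require Import all_boot.
From mathcomp Require Import zify.
Set Implicit Arguments. Unset Strict Implicit. Unset Printing Implicit Defensive.

Lemma move_inv k t o t' : move k t o = Some t' ->
 [\/ exists x r, [/\ o = 0, inp t = x :: r, push_dec_ok x (nth [::] (Ds t) 0) &
        t' = MState r (set_nth [::] (Ds t) 0 (x :: nth [::] (Ds t) 0)) (Ist t) (out t)],
     exists i x r, [/\ o = i.+1, i.+1 < k, nth [::] (Ds t) i = x :: r,
        push_dec_ok x (nth [::] (Ds t) i.+1) &
        t' = MState (inp t) (set_nth [::] (set_nth [::] (Ds t) i r) i.+1 (x :: nth [::] (Ds t) i.+1)) (Ist t) (out t)],
     exists x r, [/\ o = k, nth [::] (Ds t) k.-1 = x :: r, push_inc_ok x (Ist t) &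
        t' = MState (inp t) (set_nth [::] (Ds t) k.-1 r) (x :: Ist t) (out t)] |
     exists x r, [/\ k < o, Ist t = x :: r & t' = MState (inp t) (Ds t) r (rcons (out t) x)]].
Proof.
rewrite /move /basic_move /Dstack.
case: (leqP o k) => Hok.
- case: o Hok => [|i] Hok /=.
  + case E: (inp t) => [|x r] //; case: ifP => // Hp [<-].
    by apply: Or41; exists x, r.
  + case: (ltnP i.+1 k) => Hik.
    * case E: (nth [::] (Ds t) i) => [|x r] //; case: ifP => // Hp [<-].
      by apply: Or42; exists i, x, r.
    * have Ek : i.+1 = k by apply/eqP; rewrite eqn_leq Hok.
      rewrite Ek eqxx. 
      case E: (nth [::] (Ds t) k.-1) => [|x r] //; case: ifP => // Hp [<-].
      by apply: Or43; exists x, r.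
- idtac.

  case: ifP => // _. case E: (Ist t) => [|x r] //; case: ifP => // _ [<-].
  by apply: Or44; exists x, r.
Qed.

Lemma count_set_nth (P : pred nat) (s : seq (seq nat)) i v :
  count P (flatten (set_nth [::] s i v)) + count P (nth [::] s i) =
  count P v + count P (flatten s).
Proof.
elim: s i => [|y s IH] [|i] /=.
- by rewrite cats0.
- rewrite !addn0. elim: i => [|i IHi] /=; first by rewrite cats0.
  exact: IHi.
- rewrite !count_cat; lia.
- have := IH i; rewrite !count_cat; lia.
Qed.

Definition Inv (pi : seq nat) (t : mstate) :=
  [/\ perm_eq (inp t ++ flatten (Ds t) ++ Ist t ++ out t) pi,
      forall j, sorted gtn (nth [::] (Ds t) j),
      sorted ltn (Ist t) & exists p, pi = p ++ inp t].

Lemma dec_max x D : sorted gtn D -> push_dec_ok x D -> forall z, z \in D -> z < x.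
Proof.
case: D => [|y D] //= Hs Hp z; rewrite inE => /orP [/eqP -> //|zD].
have /allP H := order_path_min (fun y x z h1 h2 => ltn_trans h2 h1) Hs.
exact: ltn_trans (H z zD) Hp.
Qed.

Lemma inc_min x I : sorted ltn I -> push_inc_ok x I -> forall z, z \in I -> x < z.
Proof.
case: I => [|y I] //= Hs Hp z; rewrite inE => /orP [/eqP -> //|zI].
have /allP H := order_path_min ltn_trans Hs.
exact: ltn_trans Hp (H z zI).
Qed.

Lemma sorted_push_dec x D : sorted gtn D -> push_dec_ok x D -> sorted gtn (x :: D).
Proof. by case: D => [|y D] //= -> ->. Qed.

Lemma sorted_push_inc x D : sorted ltn D -> push_inc_ok x D -> sorted ltn (x :: D).
Proof. by case: D => [|y D] //= -> ->. Qed.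

Lemma Inv_step k pi t o t' : Inv pi t -> move k t o = Some t' -> Inv pi t'.
Proof.
case=> Hp Hs HI [p Hpi] /move_inv
  [[x [r [_ Hi Hd ->]]] | [i [x [r [_ Hik Hn Hd ->]]]] | [x [r [_ Hn Hd ->]]] | [x [r [_ Hi ->]]]];
  rewrite /Inv /=.
- split.
  + apply: (perm_trans _ Hp); apply/permP => P.
    have := count_set_nth P (Ds t) 0 (x :: nth [::] (Ds t) 0).
    rewrite Hi /= !count_cat /=; lia.
  + move=> j; rewrite nth_set_nth /=; case: ifP => _ //.
    exact: sorted_push_dec.
  + done.
  + by exists (rcons p x); rewrite cat_rcons -Hi.
- split.
  + apply: (perm_trans _ Hp); apply/permP => P.
    have := count_set_nth P (set_nth [::] (Ds t) i r) i.+1 (x :: nth [::] (Ds t) i.+1).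
    have := count_set_nth P (Ds t) i r.
    rewrite nth_set_nth /= (gtn_eqF (ltnSn i)) Hn /= !count_cat /=; lia.
  + move=> j; rewrite !nth_set_nth /=; case: ifP => _.
      exact: sorted_push_dec.
    rewrite nth_set_nth /=; case: ifP => _ //. by have := Hs i; rewrite Hn => /path_sorted.
  + done.
  + by exists p.
- split.
  + apply: (perm_trans _ Hp); apply/permP => P.
    have := count_set_nth P (Ds t) k.-1 r.
    rewrite Hn /= !count_cat /= !count_cat; lia.
  + move=> j; rewrite nth_set_nth /=; case: ifP => _ //.
    by have := Hs k.-1; rewrite Hn => /path_sorted.
  + exact: sorted_push_inc.
  + by exists p.
- split.
  + apply: (perm_trans _ Hp); apply/permP => P.
    rewrite Hi -cats1 /= !count_cat /= !count_cat /=; lia.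
  + done.
  + by move: HI; rewrite Hi => /path_sorted.
  + by exists p.
Qed.

Definition behind k (t : mstate) (a c : nat) :=
 [\/ [/\ a \in inp t, c \in inp t & index c (inp t) < index a (inp t)],
     a \in inp t /\ exists j, j < k /\ c \in nth [::] (Ds t) j,
     exists l j, [/\ l < j, j < k, a \in nth [::] (Ds t) l & c \in nth [::] (Ds t) j] |
     exists j, [/\ j < k, a \in nth [::] (Ds t) j, c \in nth [::] (Ds t) j &
        index c (nth [::] (Ds t) j) < index a (nth [::] (Ds t) j)]].

Lemma memcons (y x : nat) r : y \in x :: r -> x != y -> y \in r.
Proof. by rewrite inE => /orP [/eqP ->|//]; rewrite eqxx. Qed.

Lemma behind_step k t t' o a c : 0 < k ->
  (forall j, sorted gtn (nth [::] (Ds t) j)) -> a < c -> behind k t a c ->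
  move k t o = Some t' ->
  behind k t' a c \/ (Ist t' = c :: Ist t /\ push_inc_ok c (Ist t)).
Proof.
move=> hk Hs Hac Hb /move_inv
  [[x [r [_ Hi Hd ->]]] | [i [x [r [_ Hik Hn Hd ->]]]] | [x [r [_ Hn Hd ->]]] | [x [r [_ Hi ->]]]];
  last by left.
-
  left; rewrite /behind /=.
  case: Hb => [[Hai Hci Hidx] | [Hai [j [Hjk Hcj]]] | [l [j [Hlj Hjk Hal Hcj]]] | [j [Hjk Haj Hcj Hidx]]].
  + rewrite Hi /= in Hai Hci Hidx.
    move: Hai Hci; rewrite !inE.
    case: (eqVneq x a) Hidx => [-> //|Hxa] Hidx.
    case: (eqVneq x c) Hidx => [Exc|Hxc] Hidx.
    * rewrite /= => Har _. apply: Or42; split => //.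
      by exists 0; split => //; rewrite nth_set_nth /= -Exc mem_head.
    * rewrite ?(eq_sym _ x) ?(negbTE Hxa) ?(negbTE Hxc) /= => Har Hcr. apply: Or41; split => //.
  + rewrite Hi inE in Hai.
    case: (eqVneq a x) Hai => [Eax|Hax] /= Hai.
    * case: j Hjk Hcj => [|j] Hjk Hcj.
        by have := dec_max (Hs 0) Hd Hcj; rewrite -Eax ltnNge ltnW.
      apply: Or43; exists 0, j.+1; split => //.
        by rewrite nth_set_nth /= Eax mem_head.
      by rewrite nth_set_nth.
    * apply: Or42; split => //; exists j; split => //.
      rewrite nth_set_nth /=; case: ifP => [/eqP Ej|//].
      by rewrite inE -Ej Hcj orbT.
  + apply: Or43; exists l, j; split => //; rewrite nth_set_nth /=;
      case: ifP => [/eqP E|//]; rewrite inE -E ?Hal ?Hcj orbT //.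
  + apply: Or44; exists j; rewrite !nth_set_nth /=; case: ifP => [/eqP E|//].
    subst j.
    have ha := dec_max (Hs 0) Hd Haj; have hc := dec_max (Hs 0) Hd Hcj.
    rewrite !inE Haj Hcj !orbT /= (gtn_eqF ha) (gtn_eqF hc); split => //.
-
  left; rewrite /behind /=.
  have Hmem : forall y j, y \in nth [::] (Ds t) j ->
      y \in nth [::] (set_nth [::] (set_nth [::] (Ds t) i r) i.+1 (x :: nth [::] (Ds t) i.+1)) j
      \/ (j = i /\ y = x).
    move=> y j Hy; rewrite !nth_set_nth /=.
    case: ifP => [/eqP E|_]; first by left; rewrite inE -E Hy orbT.
    rewrite nth_set_nth /=; case: ifP => [/eqP E|_]; last by left.
    move: Hy; rewrite E Hn inE => /orP [/eqP ->|Hy]; [by right | by left].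
  have Hx : x \in nth [::] (set_nth [::] (set_nth [::] (Ds t) i r) i.+1 (x :: nth [::] (Ds t) i.+1)) i.+1.
    by rewrite nth_set_nth /= eqxx mem_head.
  case: Hb => [Hb | [Hai [j [Hjk Hcj]]] | [l [j [Hlj Hjk Hal Hcj]]] | [j [Hjk Haj Hcj Hidx]]].
  + by apply: Or41.
  + apply: Or42; split => //.
    case: (Hmem _ _ Hcj) => [Hc|[E ->]]; first by exists j.
    by exists i.+1.
  + case: (Hmem _ _ Hal) => [Ha|[El Ea]]; case: (Hmem _ _ Hcj) => [Hc|[Ej Ec]].
    * by apply: Or43; exists l, j.
    * apply: Or43; exists l, i.+1; split => //; [by rewrite ltnS ltnW // -Ej | by rewrite Ec].
    * subst l a.
      case: (eqVneq j i.+1) => [Ej|Hj].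
        by subst j; have := dec_max (Hs i.+1) Hd Hcj; rewrite ltnNge ltnW.
      apply: Or43; exists i.+1, j; split => //.
      by rewrite ltn_neqAle eq_sym Hj Hlj.
    * by subst; rewrite ltnn in Hac.
  + case: (eqVneq j i) => [Ej|Hji].
    * subst j; rewrite Hn /= in Hidx Haj Hcj.
      case: (eqVneq x a) Hidx => [_ //|Hxa] Hidx.
      case: (eqVneq x c) Hidx => [Exc|Hxc] Hidx.
      - apply: Or43; exists i, i.+1; split => //.
          by rewrite nth_set_nth /= (ltn_eqF (ltnSn i)) nth_set_nth /= eqxx; apply: memcons Haj Hxa.
        by rewrite -Exc.
      - apply: Or44; exists i; rewrite nth_set_nth /= (ltn_eqF (ltnSn i)) nth_set_nth /= eqxx.
        have Ha := memcons Haj Hxa; have Hc := memcons Hcj Hxc.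
        split => //; exact: ltnW.
    * case: (eqVneq j i.+1) => [Ej|Hj1].
      - subst j.
        have ha := dec_max (Hs i.+1) Hd Haj; have hc := dec_max (Hs i.+1) Hd Hcj.
        apply: Or44; exists i.+1; rewrite nth_set_nth /= eqxx.
        by rewrite !inE Haj Hcj !orbT /= (gtn_eqF ha) (gtn_eqF hc).
      - apply: Or44; exists j; rewrite nth_set_nth /= (negbTE Hj1) nth_set_nth /= (negbTE Hji).
        by split.
-
  rewrite /behind /=.
  have Hmem : forall y j, y \in nth [::] (Ds t) j ->
      y \in nth [::] (set_nth [::] (Ds t) k.-1 r) j \/ (j = k.-1 /\ y = x).
    move=> y j Hy; rewrite !nth_set_nth /=.
    case: ifP => [/eqP E|_]; last by left.
    move: Hy; rewrite E Hn inE => /orP [/eqP ->|Hy]; [by right | by left].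
  case: Hb => [Hb | [Hai [j [Hjk Hcj]]] | [l [j [Hlj Hjk Hal Hcj]]] | [j [Hjk Haj Hcj Hidx]]].
  + by left; apply: Or41.
  + case: (Hmem _ _ Hcj) => [Hc|[E ->]]; last by right.
    by left; apply: Or42; split => //; exists j.
  + case: (Hmem _ _ Hcj) => [Hc|[E ->]]; last by right.
    left; apply: Or43; exists l, j; split => //.
    rewrite nth_set_nth /= ifF //; apply/negbTE; rewrite neq_ltn.
    by rewrite (leq_trans Hlj) // -ltnS prednK.
  + case: (eqVneq j k.-1) => [Ej|Hj].
    * subst j; rewrite Hn /= in Hidx Haj Hcj.
      case: (eqVneq x a) Hidx => [_ //|Hxa] Hidx.
      case: (eqVneq x c) Hidx => [Exc|Hxc] Hidx; first by right; subst x.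
      left; apply: Or44; exists k.-1; rewrite !nth_set_nth /= eqxx.
      have Ha := memcons Haj Hxa; have Hc := memcons Hcj Hxc.
      by split.
    * left; apply: Or44; exists j; rewrite !nth_set_nth /= (negbTE Hj).
      by split.
Qed.

Lemma run_cat k t o1 o2 :
  run k t (o1 ++ o2) = if run k t o1 is Some u then run k u o2 else None.
Proof.
elim: o1 t => [|o o1 IH] t //=; case: (move k t o) => // u; exact: IH.
Qed.

Lemma run_Inv k pi t ops t' : Inv pi t -> run k t ops = Some t' -> Inv pi t'.
Proof.
elim: ops t => [|o ops IH] t /=; first by move=> ? [<-].
case E: (move k t o) => [u|] // HI; apply: IH; exact: Inv_step HI E.
Qed.

Lemma Inv_init k pi : Inv pi (init_state k pi).
Proof.
have F : flatten (nseq k ([::] : seq nat)) = [::] by elim: k => //.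
split => /=.
- by rewrite F /= cats0 perm_refl.
- by move=> j; rewrite nth_nseq; case: ifP.
- done.
- by exists [::].
Qed.

Lemma mem_flat (y : nat) s j : y \in nth [::] s j -> y \in flatten s.
Proof.
case: (ltnP j (size s)) => H; last by rewrite nth_default.
move=> Hy; apply/flattenP; exists (nth [::] s j) => //; exact: mem_nth.
Qed.

Lemma behind_mem k t a c : behind k t a c -> a \in inp t ++ flatten (Ds t).
Proof.
rewrite mem_cat.
case=> [[-> _ _] | [-> _] | [l [j [_ _ Ha _]]] | [j [_ Ha _ _]]] //;
  by rewrite (mem_flat Ha) orbT.
Qed.

Lemma uniq_disj (s1 s2 : seq nat) x : uniq (s1 ++ s2) -> x \in s1 -> x \notin s2.
Proof.
rewrite cat_uniq => /and3P [_ /hasPn H _] Hx; apply/negP => Hx2.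
by have := H x Hx2; rewrite Hx.
Qed.

Lemma sorted_idx (D : seq nat) a c : sorted gtn D -> a \in D -> c \in D -> a < c ->
  index c D < index a D.
Proof.
move=> Hs Ha Hc Hac.
case: (ltngtP (index c D) (index a D)) => // H.
- have := sorted_ltn_index (fun y x z h1 h2 => ltn_trans h2 h1) Hs a c Ha Hc H.
  by rewrite /= ltnNge ltnW.
- have : nth 0 D (index a D) = nth 0 D (index c D) by rewrite H.
  rewrite !nth_index // => E; by rewrite E ltnn in Hac.
Qed.

Definition R k a b c (t : mstate) :=
  (b \in Ist t /\ behind k t a c) \/ (exists p r, out t = p ++ b :: r /\ a \notin p).

Lemma R_step k pi a b c t o t' : 0 < k -> uniq pi -> Inv pi t -> a < b -> b < c ->
  R k a b c t -> move k t o = Some t' -> R k a b c t'.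
Proof.
move=> hk hpi [Hp Hs HI _] hab hbc HR Hm.
case: HR => [[HbI Hb] | [p [r [Ho Hap]]]].
- have Hac := ltn_trans hab hbc.
  case: (behind_step hk Hs Hac Hb Hm) => [Hb' | [_ Hpush]]; last first.
    by have := inc_min HI Hpush HbI; rewrite ltnNge ltnW.
  move: Hm => /move_inv
  [[x [r [_ Hi Hd Et]]] | [i [x [r [_ Hik Hn Hd Et]]]] | [x [r [_ Hn Hd Et]]] | [x [r [_ Hi Et]]]]; subst t'.
  + by left.
  + by left.
  + by left; rewrite /= inE HbI orbT.
  + move: HbI; rewrite Hi inE => /orP [/eqP Ebx|Hbr]; last by left.
    right; exists (out t), [::]; split; first by rewrite /= -cats1 Ebx.
    have Hu : uniq ((inp t ++ flatten (Ds t)) ++ Ist t ++ out t) by rewrite -catA (perm_uniq Hp).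
    have := uniq_disj Hu (behind_mem Hb); by rewrite mem_cat negb_or => /andP [].
- right. move: Hm => /move_inv
  [[x [r' [_ Hi Hd ->]]] | [i [x [r' [_ Hik Hn Hd ->]]]] | [x [r' [_ Hn Hd ->]]] | [x [r' [_ Hi ->]]]];
   try by exists p, r.
  by exists p, (rcons r x); rewrite /= Ho rcons_cat.
Qed.

Lemma run_R k pi a b c t ops t' : 0 < k -> uniq pi -> Inv pi t -> a < b -> b < c ->
  R k a b c t -> run k t ops = Some t' -> R k a b c t'.
Proof.
move=> hk hpi; elim: ops t => [|o ops IH] t /=; first by move=> _ _ _ ? [<-].
case E: (move k t o) => [u|] // HI hab hbc HR.
apply: IH => //; [exact: Inv_step HI E | exact: R_step HI hab hbc HR E].
Qed.

Theorem mainTheorem2 (k : nat) (hk : 1 <= k) (pi : seq nat) (hpi : uniq pi)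
  (a b c : nat) (ha : a \in pi) (hb : b \in pi) (hc : c \in pi)
  (hab : a < b) (hbc : b < c)
  (ops1 ops2 : seq nat) (s : mstate)
  (hrun1 : run k (init_state k pi) ops1 = Some s)
  (hbtop : head 0 (Dstack s k) = b /\ Dstack s k != [::])
  (hcond : (exists j l, [/\ 1 <= l, l <= j, j <= k,
                           c \in Dstack s j & a \in Dstack s l])
        \/ ((exists j, [/\ 1 <= j, j <= k & c \in Dstack s j]) /\ a \in inp s)
        \/ [/\ c \in inp s, a \in inp s & index c pi < index a pi]) :
  forall s' : mstate, run k (init_state k pi) (ops1 ++ k :: ops2) = Some s' ->
    out s' <> sort leq pi.
Proof.
move=> s' H.
rewrite run_cat hrun1 /= in H.
case E: (move k s k) H => [s1|] // H.
have HIs : Inv pi s := run_Inv (Inv_init k pi) hrun1.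
have Hac := ltn_trans hab hbc.
have Hbeh : behind k s a c.
  case: HIs => _ Hs _ [p Hpi]; rewrite /Dstack in hcond.
  case: hcond => [[j [l [H1l Hlj Hjk Hc Ha]]] | [[[j [H1j Hjk Hc]] Ha] | [Hc Ha Hidx]]].
  - case: (ltngtP l j) Hlj => [Hlj _|Hlj Hle|El _].
    + apply: Or43; exists l.-1, j.-1; split => //; lia.
    + lia.
    + subst l; apply: Or44; exists j.-1; split => //; first lia.
      exact: sorted_idx.
  - apply: Or42; split => //; exists j.-1; split => //; lia.
  - apply: Or41; split => //.
    have Hu : uniq (inp s ++ p) by rewrite uniq_catC -Hpi.
    move: Hidx; rewrite Hpi !index_cat.
    by rewrite (negbTE (uniq_disj Hu Ha)) (negbTE (uniq_disj Hu Hc)) ltn_add2l.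
have HR1 : R k a b c s1.
  left. have E' := E; move: E' => /move_inv
  [[x [r [Ek Hi Hd Et]]] | [i [x [r [Ek Hik Hn Hd Et]]]] | [x [r [_ Hn Hd Et]]] | [x [r [Ek Hi Et]]]].
  - by rewrite Ek in hk.
  - by rewrite -Ek ltnn in Hik.
  - have Exb : x = b by move: hbtop; rewrite /Dstack Hn => [[]].
    case: HIs => _ Hs _ _.
    have := behind_step hk Hs Hac Hbeh E.
    rewrite Et /= -Exb; case=> [Hb1|[[Exc] _]]; first by rewrite mem_head.
    by move: hbc; rewrite -Exb Exc ltnn.
  - by rewrite ltnn in Ek.
have HRs' := run_R hk hpi (Inv_step HIs E) hab hbc HR1 H.
have [Hp' _ _ _] := run_Inv (Inv_step HIs E) H.
move=> Hout.
have Hu : uniq ((inp s' ++ flatten (Ds s')) ++ Ist s' ++ out s') by rewrite -catA (perm_uniq Hp').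
have haO : a \in out s' by rewrite Hout mem_sort.
case: HRs' => [[_ Hb] | [p [r [Ho Hap]]]].
- have := uniq_disj Hu (behind_mem Hb); by rewrite mem_cat haO orbT.
- have Hsort : sorted leq (out s') by rewrite Hout; apply: sort_sorted => x y; exact: leq_total.
  move: Hsort; rewrite Ho sorted_cat_cons => /andP [_ Hpath].
  have /allP Hall := order_path_min leq_trans Hpath.
  move: haO; rewrite Ho mem_cat (negbTE Hap) /= inE => /orP [/eqP Eab|Har].
    by rewrite Eab ltnn in hab.
  by have := Hall a Har; rewrite leqNgt hab.
Qed.
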